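(* For every smooth projective fan $\mathcal F$ in $V$, the cohomology of the differential graded algebra $(D_{\mathcal F},d)$ is $H^0(D_{\mathcal F},d)=\mathbb Q$ and $H^i(D_{\mathcal F},d)=0$ for all $i>0$.
   Context: $T$ is a complex algebraic torus of dimension $n$, $X_*(T)$ its cocharacter lattice, $V=X_*(T)\otimes\mathbb R$. $\mathcal F$ is a smooth projective rational fan in $V$ with set of vertices (primitive ray generators) $\Gamma_{\mathcal F}$. $D_{\mathcal F}$ is the quotient of the graded-commutative algebra $\mathbb Q[x_c]_{c\in\Gamma_{\mathcal F}}\otimes\bigwedge(\tau_c)_{c\in\Gamma_{\mathcal F}}$ (with $\deg x_c=2$, $\deg\tau_c=1$) by the ideal $\mathcal J_{\mathcal F}$ generated by all monomials $x_{c_{i_1}}\cdots x_{c_{i_h}}\tau_{c_{j_1}}\cdots\tau_{c_{j_k}}$ such that the vertices $c_{i_1},\dots,c_{i_h},c_{j_1},\dots,c_{j_k}$ do not span a cone of $\mathcal F$. The differential $d$ is the unique (graded) derivation of degree $1$ with $d(x_c)=0$, $d(\tau_c)=x_c$; it preserves $\mathcal J_{\mathcal F}$. *)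

(* Defs.v *)
From HB Require Import structures.
From mathcomp Require Import all_boot all_order all_algebra.
From mathcomp Require Import freeg.
Set Implicit Arguments. Unset Strict Implicit. Unset Printing Implicit Defensive.
Import Order.TTheory GRing.Theory Num.Theory.
Local Open Scope ring_scope.

(* Fans.  X_*(T) is identified with Z^n (column vectors), V = R^n.     *)
(* A simplicial fan is given by a finite index type Γ of vertices,     *)
(* the ray generator  ray c : Z^n  of each vertex, and the set         *)
(* [cones] of those vertex subsets which span a cone of the fan.       *)
(* Cones are tested on rational points (all data are rational).        *)
Section Fans.
Variables (n : nat) (Γ : finType) (ray : Γ -> 'cV[int]_n).

Definition rayQ (c : Γ) : 'cV[rat]_n := map_mx (fun z : int => z%:~R) (ray c).

Definition in_cone (σ : {set Γ}) (v : 'cV[rat]_n) : Prop :=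
  exists lam : Γ -> rat,
    [/\ forall c, 0 <= lam c, forall c, c \notin σ -> lam c = 0
      & v = \sum_(c : Γ) lam c *: rayQ c].

(* smooth rational fan whose set of vertices is exactly Γ *)
Definition is_smooth_fan (cones : {set {set Γ}}) : Prop :=
  [/\ injective ray,
      set0 \in cones /\ (forall c : Γ, [set c] \in cones),
      (forall σ τ : {set Γ}, σ \in cones -> τ \subset σ -> τ \in cones),
      (* two cones meet in a common face *)
      (forall σ τ : {set Γ}, σ \in cones -> τ \in cones ->
         forall v, (in_cone σ v /\ in_cone τ v) <-> in_cone (σ :&: τ) v) &
      (* smoothness: the rays of every cone are part of a Z-basis of Z^n *)
      (forall σ : {set Γ}, σ \in cones ->
         exists (B : 'M[int]_n) (f : Γ -> 'I_n),
           [/\ B \in unitmx, {in σ &, injective f}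
             & forall c, c \in σ -> col (f c) B = ray c])].

Definition is_complete_fan (cones : {set {set Γ}}) : Prop :=
  forall v : 'cV[rat]_n, exists2 σ, σ \in cones & in_cone σ v.

(* projective: complete and admitting a strictly convex support function,
   given by linear forms m σ on the maximal (n-dimensional) cones:
   ψ = m τ on cone τ, and m σ <= ψ everywhere with equality exactly on cone σ *)
Definition is_projective_fan (cones : {set {set Γ}}) : Prop :=
  is_complete_fan cones /\
  exists m : {set Γ} -> 'rV[rat]_n,
    forall σ τ : {set Γ}, σ \in cones -> τ \in cones ->
      #|σ| = n -> #|τ| = n ->
      forall v : 'cV[rat]_n, in_cone τ v ->
        (m σ *m v) 0 0 <= (m τ *m v) 0 0 /\
        ((m σ *m v) 0 0 = (m τ *m v) 0 0 <-> in_cone σ v).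

End Fans.

(* The free graded-commutative algebra Q[x_c] ⊗ Λ(τ_c), c ∈ Γ.          *)
(* Basis: monomials x^a τ^S  (a : Γ -> nat, S ⊆ Γ), where τ^S is the    *)
(* product of the τ_c, c ∈ S, in increasing order of enum_rank.         *)
Section Algebra.
Variable Γ : finType.

Definition mon : Type := ({ffun Γ -> nat} * {set Γ})%type.
Definition alg : Type := {freeg mon / rat}.

Definition rk (c : Γ) : nat := enum_rank c.

Definition mdeg (m : mon) : nat := (\sum_(c : Γ) m.1 c).*2 + #|m.2|.

Definition homog (i : nat) (v : alg) : Prop :=
  forall m : mon, coeff m v != 0 -> mdeg m = i.

Definition one_alg : alg := << ([ffun=> 0%N], set0) >>.

(* product of basis monomials (x's are even, hence central) *)
Definition mulm (m1 m2 : mon) : alg :=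
  if [disjoint m1.2 & m2.2] then
    ((-1) ^+ (\sum_(s in m1.2) #|[set t in m2.2 | (rk t < rk s)%N]|) : rat)
      *: << ([ffun c => m1.1 c + m2.1 c], m1.2 :|: m2.2) >>
  else 0.

Definition mul_alg (u v : alg) : alg :=
  fglift (fun m1 => fglift (fun m2 => mulm m1 m2) v) u.

(* the differential: the derivation with d x_c = 0, d τ_c = x_c, i.e.
   d(x^a τ_{s1}...τ_{sk}) = Σ_j (-1)^(j-1) x^(a + e_{sj}) τ_{s1}..^..τ_{sk} *)
Definition dm (m : mon) : alg :=
  \sum_(s in m.2)
    ((-1) ^+ #|[set t in m.2 | (rk t < rk s)%N]| : rat)
      *: << ([ffun c => m.1 c + (c == s)%N], m.2 :\ s) >>.

Definition d_alg (v : alg) : alg := fglift dm v.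

Definition gen_mon (cones : {set {set Γ}}) (m : mon) : bool :=
  ([set c | (0 < m.1 c)%N] :|: m.2) \notin cones.

(* J = the (two-sided) ideal generated by these monomials *)
Definition in_J (cones : {set {set Γ}}) (v : alg) : Prop :=
  exists s : seq (alg * mon * alg),
    all (fun t => gen_mon cones t.1.2) s /\
    v = \sum_(t <- s) mul_alg (mul_alg t.1.1 << t.1.2 >>) t.2.

End Algebra.

(* Main.v *)
Require Import Defs.
From HB Require Import structures.
From mathcomp Require Import all_boot all_order all_algebra.
From mathcomp Require Import freeg.
From mathcomp Require Import zify.
Set Implicit Arguments. Unset Strict Implicit. Unset Printing Implicit Defensive.
Import Order.TTheory GRing.Theory Num.Theory.
Local Open Scope ring_scope.

Section Gen.
Variables (K : choiceType).

HB.instance Definition _ (M : lmodType rat) (f : K -> M) :=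
  GRing.isAdditive.Build {freeg K / rat} M (fglift f) (lift_is_additive f).

Lemma freegZU (k k' : rat) (x : K) :
  k *: << k' *g x >> = << (k * k') *g x >> :> {freeg K / rat}.
Proof. by apply/eqP/freeg_eqP => y; rewrite coeffZ !coeffU mulrA. Qed.

Lemma fgliftD (M : lmodType rat) (f : K -> M) x y : fglift f (x + y) = fglift f x + fglift f y.
Proof. exact: raddfD. Qed.
Lemma fglift0 (M : lmodType rat) (f : K -> M) : fglift f 0 = 0.
Proof. exact: raddf0. Qed.
Lemma fglift_sum (M : lmodType rat) (f : K -> M) (I : Type) (s : seq I) (P : pred I) F :
  fglift f (\sum_(i <- s | P i) F i) = \sum_(i <- s | P i) fglift f (F i).
Proof. exact: raddf_sum. Qed.

Lemma fgliftZ (M : lmodType rat) (f : K -> M) (k : rat) (D : {freeg K / rat}) :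
  fglift f (k *: D) = k *: fglift f D.
Proof.
elim/freeg_ind_dom0: D => [|k' x D _ _ IH]; first by rewrite scaler0 fglift0 scaler0.
by rewrite scalerDr !fgliftD IH freegZU !liftU scalerDr scalerA.
Qed.

Definition supp (Q : pred K) (v : {freeg K / rat}) :=
  forall m, coeff m v != 0 -> Q m.

Lemma supp0 (Q : pred K) : supp Q 0.
Proof. by move=> m; rewrite coeff0 eqxx. Qed.

Lemma suppD (Q : pred K) u v : supp Q u -> supp Q v -> supp Q (u + v).
Proof.
move=> hu hv m; rewrite coeffD.
have [/hu//|/negbNE/eqP u0] := boolP (coeff m u != 0).
by rewrite u0 add0r => /hv.
Qed.

Lemma suppZ (Q : pred K) (k : rat) v : supp Q v -> supp Q (k *: v).
Proof. by move=> hv m; rewrite coeffZ mulf_eq0 negb_or => /andP[_ /hv]. Qed.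

Lemma supp_sum (Q : pred K) (I : Type) (s : seq I) (P : pred I) (F : I -> {freeg K / rat}) :
  (forall i, P i -> supp Q (F i)) -> supp Q (\sum_(i <- s | P i) F i).
Proof.
move=> H; apply: (big_ind (supp Q)); [exact: supp0|exact: suppD|exact: H].
Qed.

Lemma suppU (Q : pred K) (k : rat) x : Q x -> supp Q << k *g x >>.
Proof.
move=> Qx m; rewrite coeffU; case: (x =P m) => [<- //|_]; by rewrite mulr0 eqxx.
Qed.

Lemma supp_lift (Q : pred K) (f : K -> {freeg K / rat}) (D : {freeg K / rat}) :
  (forall z, coeff z D != 0 -> supp Q (f z)) -> supp Q (fglift f D).
Proof.
move=> H; rewrite -(freeg_sumE D) fglift_sum big_seq; apply: supp_sum => z.
rewrite mem_dom => /H hz; rewrite liftU; exact: suppZ.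
Qed.

End Gen.

Section Main.
Variable Γ : finType.
Implicit Types (m z : mon Γ) (v u : alg Γ).

Definition sup m : {set Γ} := [set c | (0 < m.1 c)%N] :|: m.2.
Definition one_mon : mon Γ := ([ffun=> 0%N], set0).

Definition pmin (A : {set Γ}) : option Γ :=
  [pick c in A | [forall t in A, (rk c <= rk t)%N]].

Lemma pminS A c : pmin A = Some c -> c \in A /\ forall t, t \in A -> (rk c <= rk t)%N.
Proof.
rewrite /pmin; case: pickP => [c' /andP[cA /forallP H] [<-]|//]; split=> // t tA.
by have /implyP := H t; apply.
Qed.

Lemma pminN A : A != set0 -> exists c, pmin A = Some c.
Proof.
case/set0Pn => c0 c0A; rewrite /pmin; case: pickP => [c _|]; first by exists c.
case: (arg_minnP (fun c => rk c) c0A) => c cA Hc /(_ c).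
move/negbT; rewrite negb_and => /orP[/negP[]|/negP[]]; first exact: cA.
by apply/forallP => t; apply/implyP => tA; exact: Hc.
Qed.

Definition hm m : alg Γ :=
  if pmin (sup m) is Some c then
    if c \in m.2 then 0 else << ([ffun x => (m.1 x - (x == c))%N], c |: m.2) >>
  else 0.
Definition h_alg v := fglift hm v.

Lemma rk_lt (A : {set Γ}) c s : pmin A = Some c -> s \in A -> s != c -> (rk c < rk s)%N.
Proof.
move=> /pminS[cA H] sA nsc; rewrite ltn_neqAle H // andbT.
apply/negP => /eqP E; move/negP: nsc; apply; apply/eqP.
by apply: enum_rank_inj; apply: val_inj; rewrite /= -/(rk s) -/(rk c) E.
Qed.

Lemma ncount0 (A S : {set Γ}) c : pmin A = Some c -> S \subset A ->
  #|[set t in S | (rk t < rk c)%N]| = 0%N.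
Proof.
move=> /pminS[cA H] SA; apply/eqP; rewrite cards_eq0; apply/eqP/setP => t.
rewrite !inE; apply/negP => /andP[tS]; rewrite ltnNge H //.
exact: (subsetP SA).
Qed.

Lemma sub_sup m : m.2 \subset sup m.
Proof. by apply/subsetP => x xS; rewrite /sup inE xS orbT. Qed.

Lemma sup_dterm (a : {ffun Γ -> nat}) (S : {set Γ}) s : s \in S ->
  sup ([ffun x => (a x + (x == s))%N], S :\ s) = sup (a, S).
Proof.
move=> sS; apply/setP => x; rewrite /sup !inE ffunE /=.
case: (eqVneq x s) => [->|nxs]; first by rewrite addn1 sS orbT.
by rewrite addn0.
Qed.

Lemma key_identity m : sup m != set0 -> d_alg (hm m) + h_alg (dm m) = << m >>.
Proof.
case: m => a S; set m := (a, S) => /pminN [c Ec].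
have [cA cmin] := pminS Ec.
have hdm : h_alg (dm m) = \sum_(s in S) ((-1) ^+ #|[set t in S | (rk t < rk s)%N]| : rat)
   *: hm ([ffun x => (a x + (x == s))%N], S :\ s).
  rewrite /h_alg /dm fglift_sum; apply: eq_bigr => s _.
  by rewrite fgliftZ liftU scale1r.
have hmt s : s \in S -> hm ([ffun x => (a x + (x == s))%N], S :\ s) =
   if c \in S :\ s then 0 else
   << ([ffun x => (([ffun x => (a x + (x == s))%N] x) - (x == c))%N], c |: (S :\ s)) >>.
  by move=> sS; rewrite /hm sup_dterm // -/m Ec.
have hmm : hm m = if c \in S then 0 else
   << ([ffun x => (a x - (x == c))%N], c |: S) >> by rewrite /hm Ec.
rewrite hdm hmm.
case: ifP => cS.
-
  rewrite /d_alg fglift0 add0r (bigD1 c) //= big1 ?addr0; last first.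
    move=> s /andP[sS nsc]; rewrite hmt // in_setD1 eq_sym nsc cS /=.
    by rewrite scaler0.
  rewrite hmt // setD11 (ncount0 Ec (sub_sup m)) expr0 scale1r.
  congr << _ >>; congr (_, _); last exact: setD1K.
  by apply/ffunP => x; rewrite !ffunE addnK.
-
  have ac : (0 < a c)%N.
    by move: cA; rewrite /sup inE cS orbF inE.
  rewrite /d_alg liftU scale1r /dm /= (bigD1 c) ?setU11 //=.
  rewrite setU1K ?cS // (ncount0 Ec); last first.
    apply/subsetP => t; rewrite in_setU1 => /orP[/eqP->//|tS].
    exact: (subsetP (sub_sup m)).
  rewrite expr0 scale1r.
  have -> : [ffun x => ([ffun x0 => (a x0 - (x0 == c))%N] x + (x == c))%N] = a.
    apply/ffunP => x; rewrite !ffunE; case: (eqVneq x c) => [->|]; last by rewrite subn0 addn0.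
    by rewrite subnK.
  rewrite -addrA -[RHS]addr0; congr (_ + _).
  rewrite (eq_bigl (fun s => s \in S)); last first.
    move=> s; rewrite in_setU1; case: (eqVneq s c) => [->|_]; rewrite ?eqxx /= ?cS ?andbT //.
  rewrite -big_split /=; apply: big1 => s sS.
  have nsc : s != c by apply/eqP => E; rewrite -E sS in cS.
  rewrite hmt // in_setD1 eq_sym nsc cS /=.
  have -> : [set t in c |: S | (rk t < rk s)%N] = c |: [set t in S | (rk t < rk s)%N].
    apply/setP => t; rewrite !inE; case: (eqVneq t c) => [->|] //=.
    rewrite (rk_lt Ec) //; exact: (subsetP (sub_sup m)).
  rewrite cardsU1 inE cS /= add1n exprS mulN1r scaleNr.
  have -> : (c |: S) :\ s = c |: (S :\ s).
    have ncs : c != s by rewrite eq_sym.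
    apply/setP => t; rewrite !inE; case: (eqVneq t c) => [->|_]; rewrite ?eqxx /= ?ncs ?andbT //.
  have -> : [ffun x => ([ffun x0 => (a x0 - (x0 == c))%N] x + (x == s))%N] =
            [ffun x => ([ffun x0 => (a x0 + (x0 == s))%N] x - (x == c))%N].
    apply/ffunP => x; rewrite !ffunE; case: (eqVneq x c) => [->|]; last by rewrite !subn0.
    have /negbTE -> : c != s by rewrite eq_sym.
    by rewrite !addn0.
  exact: addNr.
Qed.


Lemma dm_sup m : supp (fun m' => sup m' == sup m) (dm m).
Proof.
case: m => a S; apply: supp_sum => s sS; apply: suppZ; apply: suppU.
by rewrite sup_dterm.
Qed.

Lemma hm_sup m : supp (fun m' => sup m' == sup m) (hm m).
Proof.
case: m => a S; rewrite /hm; case E: (pmin _) => [c|]; last exact: supp0.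
have [cA _] := pminS E.
case: ifP => cS; first exact: supp0.
apply: suppU; apply/eqP/setP => x; rewrite /sup !inE ffunE /=.
case: (eqVneq x c) => [->|_]; last by rewrite subn0.
by rewrite orbT; move: cA; rewrite /sup !inE => ->.
Qed.

Lemma mdeg0 m : sup m = set0 -> mdeg m = 0%N.
Proof.
case: m => a S /= /setP H; rewrite /mdeg /=.
have -> : S = set0.
  by apply/setP => x; move: (H x); rewrite /sup !inE => /negbT/norP[_ /negbTE].
rewrite cards0 big1 // => x _; move: (H x); rewrite /sup !inE => /negbT/norP[].
by rewrite lt0n negbK => /eqP.
Qed.

Lemma hm_deg m : supp (fun m' => mdeg m' == (mdeg m).-1) (hm m).
Proof.
case: m => a S; rewrite /hm; case E: (pmin _) => [c|]; last exact: supp0.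
have [cA _] := pminS E.
case: ifP => cS; first exact: supp0.
have ac : (0 < a c)%N by move: cA; rewrite /sup !inE cS orbF.
apply: suppU; apply/eqP; rewrite /mdeg /= cardsU1 cS /=.
have Hs : (\sum_x a x = \sum_x (a x - (x == c)) + 1)%N.
  rewrite -[1%N](_ : \sum_x ((x == c) : nat) = 1%N); last first.
    by rewrite (bigD1 c) //= eqxx big1 // => x /negbTE ->.
  rewrite -big_split /=; apply: eq_bigr => x _.
  case: (eqVneq x c) => [->|_]; by rewrite ?subnK ?subn0 ?addn0.
under eq_bigr do rewrite ffunE.
rewrite Hs -!muln2; set k := (\sum_x _)%N; set l := #|S|.
rewrite mulnDl; lia.
Qed.

Lemma homotopy (s : seq (mon Γ)) (k : mon Γ -> rat) :
  (forall z, z \in s -> sup z != set0) ->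
  d_alg (h_alg (\sum_(z <- s) << k z *g z >>)) + h_alg (d_alg (\sum_(z <- s) << k z *g z >>))
  = \sum_(z <- s) << k z *g z >>.
Proof.
move=> Hs; rewrite /h_alg /d_alg !fglift_sum -big_split /= big_seq [RHS]big_seq.
apply: eq_bigr => z zs; rewrite !liftU !fgliftZ -scalerDr.
rewrite -/(d_alg (hm z)) -/(h_alg (dm z)) key_identity ?Hs //.
by rewrite freegZU mulr1.
Qed.

Definition bad (cones : {set {set Γ}}) m := sup m \notin cones.

Section J.
Variable cones : {set {set Γ}}.
Hypothesis Hdown : forall σ τ : {set Γ}, σ \in cones -> τ \subset σ -> τ \in cones.

Lemma bad_sub m m' : sup m \subset sup m' -> bad cones m -> bad cones m'.
Proof.
move=> sub; apply: contra => H; exact: Hdown H sub.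
Qed.

Lemma mulm_bad m1 m2 : bad cones m1 || bad cones m2 -> supp (bad cones) (mulm m1 m2).
Proof.
move=> Hb; rewrite /mulm; case: ifP => _; last exact: supp0.
apply: suppZ; apply: suppU; case/orP: Hb; apply: bad_sub;
  apply/subsetP => x; rewrite /sup !inE ffunE /=.
- by case/orP => [/(leq_trans)->|->]; rewrite ?leq_addr ?orbT.
- by case/orP => [/(leq_trans)->|->]; rewrite ?leq_addl ?orbT.
Qed.

Lemma mul_supp_l u w : supp (bad cones) u -> supp (bad cones) (mul_alg u w).
Proof.
move=> Hu; apply: supp_lift => z /Hu bz; apply: supp_lift => z' _.
by apply: mulm_bad; rewrite bz.
Qed.

Lemma mul_supp_rU u m : bad cones m -> supp (bad cones) (mul_alg u << m >>).
Proof.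
move=> bm; apply: supp_lift => z _; apply: supp_lift => z'.
rewrite coeffU; case: (m =P z') => [<- _|_]; last by rewrite mulr0 eqxx.
by apply: mulm_bad; rewrite bm orbT.
Qed.

Lemma inJ_supp v : in_J cones v -> supp (bad cones) v.
Proof.
case=> s [/allP Hs ->]; rewrite big_seq; apply: supp_sum => t /Hs bt.
apply: mul_supp_l; exact: mul_supp_rU.
Qed.

Lemma mulm1 m : mulm m (one_mon) = << m >>.
Proof.
case: m => a S; rewrite /mulm /= /one_mon /=.
have -> : [disjoint S & (set0 : {set Γ})].
  by rewrite disjoint_sym disjoints_subset sub0set.
rewrite big1; last first.
  move=> s _; apply/eqP; rewrite cards_eq0; apply/eqP/setP => t; by rewrite !inE.
rewrite expr0 scale1r setU0; congr << (_, _) >>.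
by apply/ffunP => x; rewrite !ffunE addr0.
Qed.

Lemma mul1m m : mulm (one_mon) m = << m >>.
Proof.
case: m => a S; rewrite /mulm /= /one_mon /=.
have -> : [disjoint (set0 : {set Γ}) & S].
  by rewrite disjoints_subset sub0set.
rewrite big_set0 expr0 scale1r set0U; congr << (_, _) >>.
by apply/ffunP => x; rewrite !ffunE add0r.
Qed.

Lemma supp_inJ v : supp (bad cones) v -> in_J cones v.
Proof.
move=> Hv.
exists [seq ((one_alg Γ, z), << coeff z v *g one_mon >>) | z <- dom v]; split.
  apply/allP => t /mapP [z zd ->] /=; apply: Hv; by rewrite -mem_dom.
rewrite big_map -{1}(freeg_sumE v); apply: eq_bigr => z _ /=.
rewrite /mul_alg /one_alg liftU scale1r liftU scale1r mul1m liftU scale1r.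
rewrite liftU mulm1; apply/eqP/freeg_eqP => y; by rewrite coeffZ !coeffU mul1r.
Qed.


End J.

End Main.

Lemma mdeg_eq0 (Γ : finType) (m : mon Γ) : mdeg m = 0%N -> m = one_mon Γ.
Proof.
case: m => a S; rewrite /mdeg /= => /eqP; rewrite addn_eq0 double_eq0 sum_nat_eq0 cards_eq0.
case/andP => /forallP H /eqP ->; congr pair; apply/ffunP => x; rewrite ffunE.
exact/eqP/(H x).
Qed.

Theorem proposition3p1 (n : nat) (Γ : finType) (ray : Γ -> 'cV[int]_n)
    (cones : {set {set Γ}}) :
  is_smooth_fan ray cones -> is_projective_fan ray cones ->
  [/\ ~ in_J cones (one_alg Γ),
      (forall v : alg Γ, homog 0 v -> in_J cones (d_alg v) ->
         exists c : rat, in_J cones (v - c *: one_alg Γ)) &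
      (forall (i : nat) (v : alg Γ), (0 < i)%N -> homog i v ->
         in_J cones (d_alg v) ->
         exists w : alg Γ, homog i.-1 w /\ in_J cones (v - d_alg w))].
Proof.
move=> [_ [set0c _] Hdown _ _] _; split.
- move=> /(inJ_supp Hdown) H; have := H (one_mon Γ).
  rewrite /one_alg coeffU eqxx mulr1 oner_eq0 => /(_ isT).
  rewrite /bad; suff -> : sup (one_mon Γ) = set0 by rewrite set0c.
  by apply/setP => x; rewrite /sup !inE ffunE.
- move=> v Hv _; exists (coeff (one_mon Γ) v).
  apply: supp_inJ => m.
  rewrite coeffB coeffZ /one_alg coeffU mul1r.
  case: (eqVneq (one_mon Γ) m) => [<-|ne]; first by rewrite mulr1 subrr eqxx.
  rewrite mulr0 subr0 => /Hv /mdeg_eq0 E.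
  by rewrite E eqxx in ne.
- move=> i v i0 Hv Hdv; exists (h_alg v); split.
  + move=> m hm0; apply/eqP; move: m hm0; apply: supp_lift => z /Hv dz.
    by move=> m' /hm_deg; rewrite dz.
  + have E := @homotopy Γ (dom v) (fun z => coeff z v).
    rewrite freeg_sumE in E.
    have -> : v - d_alg (h_alg v) = h_alg (d_alg v).
      rewrite -{1}E; first by rewrite addrAC subrr add0r.
      move=> z; rewrite mem_dom => /Hv dz; apply/negP => /eqP /mdeg0.
      by rewrite dz => i00; rewrite i00 in i0.
    apply: supp_inJ; apply: supp_lift => z /(inJ_supp Hdown Hdv) bz m'.
    by move=> /hm_sup /eqP; rewrite /bad => ->.
Qed.
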